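(* Let $n\geq0$ be an integer. Then $\dim_{\mathbb C}\big(\mathscr M_n(x_1)\cap\mathscr M_n(x_2)\cap\mathscr M_n(x_3)\big)=0$ if $n<t_1+t_2+t_3$, and equals $2(n-t_1-t_2-t_3+1)$ if $n\geq t_1+t_2+t_3$.
   Context: Fix real numbers $k_1,k_2,k_3$. For $i=1,2,3$ let $R_i$ be the operator on functions on $\mathbb R^3$ replacing $x_i$ by $-x_i$, and $T_if=\frac{\partial f}{\partial x_i}+k_i\frac{f-R_if}{x_i}$ (Dunkl operators). Let $\sigma_1=\begin{pmatrix}0&1\\1&0\end{pmatrix}$, $\sigma_2=\begin{pmatrix}0&-\sqrt{-1}\\ \sqrt{-1}&0\end{pmatrix}$, $\sigma_3=\begin{pmatrix}1&0\\0&-1\end{pmatrix}$, and let $e_i$ act on $\mathbb C^2$ by $\sigma_i$. Tensor products are over $\mathbb R$; $\mathbb R[\cdots]_m$ denotes homogeneous polynomials of degree $m$. Let $\mathbf D=e_1\otimes T_1+e_2\otimes T_2+e_3\otimes T_3$ and $\mathscr M_n=\ker(\mathbf D|_{\mathbb C^2\otimes\mathbb R[x_1,x_2,x_3]_n})$. For $i=1,2,3$ set $t_i=-2k_i$ if $2k_i$ is an odd negative integer, and $t_i=\infty$ otherwise (with the usual conventions for sums and comparisons with $\infty$). For $i=1,2,3$, $\mathscr M_n(x_i)=\mathscr M_n\cap\bigoplus_{j=t_i}^n\mathbb C^2\otimes(x_i^j\cdot\mathbb R[x_p,x_q]_{n-j})$ where $\{p,q\}=\{1,2,3\}\setminus\{i\}$,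 interpreted as $\{0\}$ if $n<t_i$. *)

(* Defs.v *)
From HB Require Import structures.
From mathcomp Require Import all_boot all_order all_algebra.
From mathcomp Require Import reals.
From mathcomp Require Import complex.
From mathcomp Require Import mpoly.

Set Implicit Arguments.
Unset Strict Implicit.
Unset Printing Implicit Defensive.

Import Order.TTheory GRing.Theory Num.Theory.
Local Open Scope ring_scope.

Definition has_dim (K : fieldType) (V : lmodType K) (S : V -> Prop) (d : nat) : Prop :=
  exists b : 'I_d -> V,
    [/\ (forall j, S (b j)),
        (forall c : 'I_d -> K, \sum_(j < d) c j *: b j = 0 -> forall j, c j = 0)
      & (forall v, S v -> exists c : 'I_d -> K, v = \sum_(j < d) c j *: b j)].

Section Dunkl.
Variable R : realType.
Local Notation C := (R[i]).
Local Notation P := {mpoly C[3]}.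

Definition refl (i : 'I_3) (p : P) : P :=
  comp_mpoly [tuple (if j == i then - 'X_j else 'X_j) | j < 3] p.

(* division by x_i (exact on polynomials all of whose monomials contain x_i,
   e.g. f - R_i f) *)
Definition divX (i : 'I_3) (q : P) : P :=
  \sum_(m <- msupp q) q@_m *: 'X_[m - U_(i)].

Definition dunkl (k : R) (i : 'I_3) (p : P) : P :=
  mderiv i p + (k%:C)%C *: divX i (p - refl i p).

(* C^2 (x)_R R[x1,x2,x3] is identified with pairs of complex polynomials.
   e_1, e_2, e_3 act by the Pauli matrices sigma_1, sigma_2, sigma_3. *)
Definition Dirac (k1 k2 k3 : R) (v : P * P) : P * P :=
  let T1 := dunkl k1 0 in
  let T2 := dunkl k2 1 in
  let T3 := dunkl k3 2 in
  (T1 v.2 - ('i)%C *: T2 v.2 + T3 v.1,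
   T1 v.1 + ('i)%C *: T2 v.1 - T3 v.2).

(* t(k) = -2k if 2k is an odd negative integer, infinity (None) otherwise *)
Definition t_index (k : R) : option nat :=
  if ((- (2 * k)) \is a Num.nat) && odd (Num.truncn (- (2 * k)))
  then Some (Num.truncn (- (2 * k))) else None.

Definition Mn (k1 k2 k3 : R) (n : nat) (v : P * P) : Prop :=
  v.1 \is n.-homog /\ v.2 \is n.-homog /\ Dirac k1 k2 k3 v = 0.

(* M_n(x_i) = M_n /\ (+)_{j = t_i}^n C^2 (x) x_i^j R[x_p,x_q]_{n-j}
   ( = {0} when t_i = infinity ) *)
Definition Mnx (k1 k2 k3 : R) (n : nat) (i : 'I_3) (t : option nat) (v : P * P) : Prop :=
  Mn k1 k2 k3 n v /\
  match t with
  | Some ti => forall m, m \in msupp v.1 ++ msupp v.2 -> (ti <= m i)%N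
  | None => v = 0
  end.

Definition Mn123 (k1 k2 k3 : R) (n : nat) (v : P * P) : Prop :=
  [/\ Mnx k1 k2 k3 n 0 (t_index k1) v, Mnx k1 k2 k3 n 1 (t_index k2) v
    & Mnx k1 k2 k3 n 2 (t_index k3) v].

Definition expected_dim (n : nat) (t1 t2 t3 : option nat) : nat :=
  match t1, t2, t3 with
  | Some a, Some b, Some c =>
      if (n < a + b + c)%N then 0%N else (2 * (n - (a + b + c) + 1))%N
  | _, _, _ => 0%N
  end.

End Dunkl.

(* Main.v *)
Require Import Defs.
From HB Require Import structures.
From mathcomp Require Import all_boot all_order all_algebra.
From mathcomp Require Import reals complex mpoly.
From mathcomp Require Import zify ring.
Import Order.TTheory GRing.Theory Num.Theory.
Local Open Scope ring_scope.
Set Implicit Arguments. Unset Strict Implicit. Unset Printing Implicit Defensive.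


Section S.
Variable R : realType.
Local Notation C := (R[i]).
Local Notation P := {mpoly C[3]}.

Lemma coef_sum_eq (q : P) x : \sum_(m' <- msupp q) q@_m' * (m' == x)%:R = q@_x.
Proof.
rewrite [in RHS](mpolyE q) raddf_sum /=; apply: eq_bigr => m' _.
by rewrite mcoeffZ mcoeffX.
Qed.

Lemma subU_eq (i : 'I_3) (m m' : 'X_{1..3}) : (0 < m' i)%N ->
  (m' - U_(i) == m)%MM = (m' == m + U_(i))%MM.
Proof.
move=> hp; apply/eqP/eqP => H; apply/mnmP => j.
  have := congr1 (fun x : 'X_{1..3} => x j) H.
  rewrite mnmBE mnmDE mnm1E; case: (eqVneq i j) => [<-|_] /=; lia.
rewrite H mnmBE mnmDE mnm1E; case: (eqVneq i j) => [<-|_] /=; lia.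
Qed.

Lemma divX_coef (i : 'I_3) (q : P) (m : 'X_{1..3}) : (forall m' : 'X_{1..3}, m' i = 0%N -> q@_m' = 0) ->
  (divX i q)@_m = q@_(m + U_(i)).
Proof.
move=> hq; rewrite /divX raddf_sum /= -coef_sum_eq; apply: eq_bigr => m' _.
rewrite mcoeffZ mcoeffX; case: (posnP (m' i)) => [/hq ->|/subU_eq ->].
  by rewrite !mul0r.
by [].
Qed.

Lemma reflX i (m : 'X_{1..3}) : refl i 'X_[m] = ((-1) ^+ (m i)) *: ('X_[m] : P).
Proof.
rewrite /refl comp_mpolyX.
rewrite (eq_bigr (fun j => ((if j == i then (-1) ^+ (m j) else 1) : C) *: ('X_j ^+ (m j) : P))); last first.
  move=> j _; rewrite tnth_mktuple; case: eqP => _; last by rewrite scale1r.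
  by rewrite -scaleN1r exprZn.
rewrite scaler_prod -mpolyXE_id; congr (_ *: _).
rewrite -big_mkcond /= big_pred1_eq //.
Qed.
Lemma refl_coef i (p : P) m : (refl i p)@_m = (-1) ^+ (m i) * p@_m.
Proof.
rewrite /refl comp_mpolyEX raddf_sum /=.
rewrite (eq_bigr (fun m' => (-1) ^+ (m i) * (p@_m' * (m' == m)%:R))).
  by rewrite -big_distrr /= coef_sum_eq.
move=> m' _; rewrite -/(refl i 'X_[m']) reflX scalerA mcoeffZ mcoeffX.
by case: eqP => [->|_]; rewrite ?mulr0 ?mulr1 // mulrC.
Qed.

Definition cc (k : R) (j : nat) : C := j%:R + (k%:C)%C * (1 - (-1) ^+ j).

Lemma dunkl_coef k i (p : P) m :
  (dunkl k i p)@_m = cc k (m i).+1 * p@_(m + U_(i)).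
Proof.
rewrite /dunkl mcoeffD mcoeffZ mcoeff_deriv divX_coef.
  rewrite mcoeffB refl_coef /cc mnmDE mnm1E eqxx addn1.
  rewrite mulrDl mulr_natl; congr (_ + _); by rewrite -mulrA mulrBl mul1r.
move=> m' h; rewrite mcoeffB refl_coef h expr0 mul1r subrr //.
Qed.
End S.


Section Abs.
Variable R : realType.
Local Notation C := (R[i]).
Local Notation P := {mpoly C[3]}.
Variables (c1 c2 c3 : nat -> C) (T1 T2 T3 : P -> P).
Hypothesis HT1 : forall p m, (T1 p)@_m = c1 (m 0).+1 * p@_(m + U_(0%R))%MM.
Hypothesis HT2 : forall p m, (T2 p)@_m = c2 (m 1).+1 * p@_(m + U_(1%R))%MM.
Hypothesis HT3 : forall p m, (T3 p)@_m = c3 (m 2).+1 * p@_(m + U_(2%R))%MM.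

Definition Dir (v : P * P) : P * P :=
  (T1 v.2 - ('i)%C *: T2 v.2 + T3 v.1, T1 v.1 + ('i)%C *: T2 v.1 - T3 v.2).

Definition E1 (g1 g2 : 'X_{1..3} -> C) (m : 'X_{1..3}) : C :=
  c1 (m 0).+1 * g2 (m + U_(0%R))%MM - 'i%C * (c2 (m 1).+1 * g2 (m + U_(1%R))%MM)
  + c3 (m 2).+1 * g1 (m + U_(2%R))%MM.
Definition E2 (g1 g2 : 'X_{1..3} -> C) (m : 'X_{1..3}) : C :=
  c1 (m 0).+1 * g1 (m + U_(0%R))%MM + 'i%C * (c2 (m 1).+1 * g1 (m + U_(1%R))%MM)
  - c3 (m 2).+1 * g2 (m + U_(2%R))%MM.

Lemma Dir_coef (v : P * P) m :
  (Dir v).1@_m = E1 (fun m => v.1@_m) (fun m => v.2@_m) m /\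
  (Dir v).2@_m = E2 (fun m => v.1@_m) (fun m => v.2@_m) m.
Proof.
by rewrite /Dir /E1 /E2 /= !(mcoeffD, mcoeffB, mcoeffN, mcoeffZ, HT1, HT2, HT3).
Qed.

Lemma Dir_eq0 (v : P * P) : Dir v = 0 <->
  forall m, E1 (fun m => v.1@_m) (fun m => v.2@_m) m = 0 /\
            E2 (fun m => v.1@_m) (fun m => v.2@_m) m = 0.
Proof.
split=> [H m|H].
  by have [<- <-] := Dir_coef v m; rewrite H !mcoeff0.
apply: (@pair_equal_spec _ _ _ _ _ _).2; split.
  apply/mpolyP => m; have [h _] := Dir_coef v m.
  by rewrite h mcoeff0 (H m).1.
apply/mpolyP => m; have [_ h] := Dir_coef v m.
by rewrite h mcoeff0 (H m).2.
Qed.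

Lemma TD (T : P -> P) (c : 'X_{1..3} -> C) (s : 'X_{1..3} -> 'X_{1..3}) :
  (forall p m, (T p)@_m = c m * p@_(s m)) ->
  (forall p q, T (p + q) = T p + T q) /\ (forall a p, T (a *: p) = a *: T p).
Proof.
move=> H; split.
  by move=> p q; apply/mpolyP => m; rewrite mcoeffD !H mcoeffD mulrDr.
by move=> a p; apply/mpolyP => m; rewrite mcoeffZ !H mcoeffZ mulrCA.
Qed.

Lemma DirD (u w : P * P) : Dir (u + w) = Dir u + Dir w.
Proof.
have [A1 _] := TD HT1; have [A2 _] := TD HT2; have [A3 _] := TD HT3.
case: u w => [u1 u2] [w1 w2]; rewrite /Dir /= A1 A2 A3 A1 A2 A3 !scalerDr.
apply: (@pair_equal_spec _ _ _ _ _ _).2; split => /=; ring.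
Qed.

Lemma DirZ a (u : P * P) : Dir (a *: u) = a *: Dir u.
Proof.
have [_ A1] := TD HT1; have [_ A2] := TD HT2; have [_ A3] := TD HT3.
case: u => [u1 u2]; rewrite /Dir /=.
apply: (@pair_equal_spec _ _ _ _ _ _).2; split => /=;
  by rewrite A1 A2 A3 !scalerDr ?scalerBr ?scalerN !scalerA [a * 'i%C]mulrC.
Qed.

End Abs.


Section Rec.
Variable R : realType.
Local Notation C := (R[i]).
Local Notation P := {mpoly C[3]}.
Variables (c1 c2 c3 : nat -> C) (ta tb tc : nat).
Hypotheses (hc1 : c1 ta = 0) (hc2 : c2 tb = 0) (hc3 : c3 tc = 0)
  (hc3n : forall j, (tc < j)%N -> c3 j != 0).

Fixpoint F (init : nat -> nat -> C * C) (j a b : nat) {struct j} : C * C :=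
  if (j < tc)%N then (0, 0) else if j == tc then init a b else
  match j with
  | 0 => (0, 0)
  | j'.+1 =>
    let u := F init j' a.+1 b in let w := F init j' a b.+1 in
    (- (c3 j)^-1 * (c1 a.+1 * u.2 - 'i%C * (c2 b.+1 * w.2)),
     (c3 j)^-1 * (c1 a.+1 * u.1 + 'i%C * (c2 b.+1 * w.1)))
  end.

Lemma F_lt init j a b : (j < tc)%N -> F init j a b = (0, 0).
Proof. by case: j => [|j] /= ->. Qed.

Lemma F_tc init a b : F init tc a b = init a b.
Proof.
suff H : forall j, j = tc -> F init j a b = init a b by apply: H.
by case=> [|j] e /=; rewrite -e ltnn eqxx.
Qed.

Lemma Feq init j a b :
  c1 a.+1 * (F init j a.+1 b).2 - 'i%C * (c2 b.+1 * (F init j a b.+1).2)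
    + c3 j.+1 * (F init j.+1 a b).1 = 0 /\
  c1 a.+1 * (F init j a.+1 b).1 + 'i%C * (c2 b.+1 * (F init j a b.+1).1)
    - c3 j.+1 * (F init j.+1 a b).2 = 0.
Proof.
case: (ltngtP j.+1 tc) => h.
- rewrite !F_lt //=; try lia. by split; ring.
- have nz := hc3n h.
  rewrite /=; have -> : (j.+1 < tc)%N = false by lia.
  have -> : (j.+1 == tc) = false by apply/eqP; lia.
  rewrite /=; split; field; exact: nz.
- have hj : (j < tc)%N by lia.
  rewrite h hc3 !(F_lt init _ _ hj) /=. by split; ring.
Qed.

Lemma F_supp init : (forall a b, (a < ta)%N || (b < tb)%N -> init a b = (0, 0)) ->
  forall j a b, (a < ta)%N || (b < tb)%N -> F init j a b = (0, 0).
Proof.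
move=> hi; elim=> [|j IH] a b hab.
  by rewrite /=; case: ifP => // _; case: ifP => // _; apply: hi.
rewrite /=; case: ifP => // _; case: ifP => [_|_]; first by apply: hi.
have z1 : c1 a.+1 = 0 \/ F init j a.+1 b = (0, 0).
  case: (ltngtP a.+1 ta) => ha; first by right; apply: IH; lia.
    by right; apply: IH; lia.
  by left; rewrite ha.
have z2 : c2 b.+1 = 0 \/ F init j a b.+1 = (0, 0).
  case: (ltngtP b.+1 tb) => hb; first by right; apply: IH; lia.
    by right; apply: IH; lia.
  by left; rewrite hb.
case: z1 => -> ; case: z2 => -> /=; apply: (@pair_equal_spec _ _ _ _ _ _).2; split; ring.
Qed.

End Rec.


Lemma mU0 (m : 'X_{1..3}) : [/\ (m + U_(0%R))%MM 0 = (m 0).+1, (m + U_(0%R))%MM 1 = m 1 & (m + U_(0%R))%MM 2 = m 2].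
Proof. by rewrite !mnmDE !mnm1E /= addn1 !addn0. Qed.
Lemma mU1 (m : 'X_{1..3}) : [/\ (m + U_(1%R))%MM 0 = m 0, (m + U_(1%R))%MM 1 = (m 1).+1 & (m + U_(1%R))%MM 2 = m 2].
Proof. by rewrite !mnmDE !mnm1E /= addn1 !addn0. Qed.
Lemma mU2 (m : 'X_{1..3}) : [/\ (m + U_(2%R))%MM 0 = m 0, (m + U_(2%R))%MM 1 = m 1 & (m + U_(2%R))%MM 2 = (m 2).+1].
Proof. by rewrite !mnmDE !mnm1E /= addn1 !addn0. Qed.
Lemma mdegU (m : 'X_{1..3}) i : mdeg (m + U_(i))%MM = (mdeg m).+1.
Proof. by rewrite mdegD mdeg1 addn1. Qed.


Section Main.
Variable R : realType.
Local Notation C := (R[i]).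
Local Notation P := {mpoly C[3]}.
Variables (c1 c2 c3 : nat -> C) (ta tb tc : nat) (n : nat).
Hypotheses (hc1 : c1 ta = 0) (hc2 : c2 tb = 0) (hc3 : c3 tc = 0)
  (hc3n : forall j, (tc < j)%N -> c3 j != 0).

Lemma uniqE (g1 g2 : 'X_{1..3} -> C) :
  (forall m, E1 c1 c2 c3 g1 g2 m = 0 /\ E2 c1 c2 c3 g1 g2 m = 0) ->
  (forall m : 'X_{1..3}, (m 2%R <= tc)%N -> g1 m = 0 /\ g2 m = 0) ->
  forall m, g1 m = 0 /\ g2 m = 0.
Proof.
move=> hE hlow.
suff H : forall j (m : 'X_{1..3}), m 2 = j -> g1 m = 0 /\ g2 m = 0 by move=> m; exact: (H _ m erefl).
elim=> [|j IH] m hm; first by apply: hlow; rewrite hm.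
case: (leqP j.+1 tc) => hj; first by apply: hlow; rewrite hm.
set m' := (m - U_(2%R))%MM.
have em : m = (m' + U_(2%R))%MM.
  apply/mnmP => i; rewrite mnmDE mnmBE mnm1E.
  case: (eqVneq (2%R : 'I_3) i) => [<-|] /=; lia.
have hm' : m' 2 = j by rewrite /m' mnmBE mnm1E eqxx; lia.
have [z10 z20] : g1 (m' + U_(0%R))%MM = 0 /\ g2 (m' + U_(0%R))%MM = 0.
  by apply: IH; have [_ _ ->] := mU0 m'.
have [z11 z21] : g1 (m' + U_(1%R))%MM = 0 /\ g2 (m' + U_(1%R))%MM = 0.
  by apply: IH; have [_ _ ->] := mU1 m'.
have [e1 e2] := hE m'.
have nz : c3 (m' 2).+1 != 0 by rewrite hm'; apply: hc3n.
move: e1 e2; rewrite /E1 /E2 z10 z20 z11 z21 -em !mulr0 subrr !add0r.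
move=> /eqP; rewrite mulf_eq0 (negbTE nz) /= => /eqP ->.
move=> /eqP; rewrite oppr_eq0 mulf_eq0 (negbTE nz) /= => /eqP -> //.
Qed.


Definition ofc (g : 'X_{1..3} -> C) : P :=
  \sum_(m : 'X_{1..3 < n.+1}) (if mdeg m == n then g m else 0) *: 'X_[m].

Lemma ofcE g m : (ofc g)@_m = if mdeg m == n then g m else 0.
Proof.
case: (ltnP (mdeg m) n.+1) => hm.
  exact: (mcoeff_mpoly (fun m => if mdeg m == n then g m else 0) hm).
rewrite (_ : (mdeg m == n) = false); last by apply/eqP; lia.
rewrite /ofc raddf_sum /=; apply: big1 => m' _.
rewrite mcoeffZ mcoeffX.
have -> : (val m' == m) = false.
  by apply/eqP => e; have := bmdeg m'; rewrite e; lia.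
by rewrite mulr0.
Qed.

Definition bv (init : nat -> nat -> C * C) : P * P :=
  (ofc (fun m => (F c1 c2 c3 tc init (m 2) (m 0) (m 1)).1),
   ofc (fun m => (F c1 c2 c3 tc init (m 2) (m 0) (m 1)).2)).

Lemma bvE init m :
  E1 c1 c2 c3 (fun m => (bv init).1@_m) (fun m => (bv init).2@_m) m = 0 /\
  E2 c1 c2 c3 (fun m => (bv init).1@_m) (fun m => (bv init).2@_m) m = 0.
Proof.
rewrite /E1 /E2 /bv /= !ofcE !mdegU.
case: eqP => _; last by split; ring.
have [a0 a1 a2] := mU0 m; have [b0 b1 b2] := mU1 m; have [d0 d1 d2] := mU2 m.
rewrite a0 a1 a2 b0 b1 b2 d0 d1 d2.
exact: Feq.
Qed.

End Main.


Definition mk (a b c : nat) : 'X_{1..3} := [multinom (nth 0%N [:: a; b; c] i) | i < 3].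
Lemma mkE a b c : [/\ mk a b c 0 = a, mk a b c 1 = b & mk a b c 2 = c].
Proof. by rewrite !mnmE. Qed.
Lemma mdeg3 (m : 'X_{1..3}) : mdeg m = (m 0%R + m 1%R + m 2%R)%N.
Proof.
rewrite mdegE !big_ord_recr big_ord0 /= add0n.
by congr (_ + _ + _)%N; congr (m _); apply: val_inj.
Qed.
Lemma mk_eta (m : 'X_{1..3}) : m = mk (m 0) (m 1) (m 2).
Proof.
apply/mnmP => i; rewrite mnmE; case: i => [[|[|[|i]]] hi] //=.
all: by congr (m _); apply: val_inj.
Qed.

Lemma sum_pick (R : realType) N (c : 'I_N -> R[i]) (x : nat) (hx : (x < N)%N) :
  \sum_(j < N) c j * ((j : nat) == x)%:R = c (Ordinal hx).
Proof.
rewrite (bigD1 (Ordinal hx)) //= eqxx mulr1 big1 ?addr0 // => j hj.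
have -> : ((j : nat) == x) = false.
  by apply/negbTE; apply: contra hj => /eqP e; apply/eqP/val_inj.
by rewrite /= mulr0n mulr0.
Qed.

Lemma sum_fst (T : zmodType) (U : zmodType) N (F : 'I_N -> T * U) :
  (\sum_(j < N) F j).1 = \sum_(j < N) (F j).1.
Proof. by apply: (big_morph fst) => //. Qed.
Lemma sum_snd (T : zmodType) (U : zmodType) N (F : 'I_N -> T * U) :
  (\sum_(j < N) F j).2 = \sum_(j < N) (F j).2.
Proof. by apply: (big_morph snd) => //. Qed.

Lemma lt_dds (d s : nat) : (s < d)%N -> (d + s < d + d)%N.
Proof. by rewrite ltn_add2l. Qed.

Section Final.
Variable R : realType.
Local Notation C := (R[i]).
Local Notation P := {mpoly C[3]}.
Variables (c1 c2 c3 : nat -> C) (ta tb tc : nat) (n : nat).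
Hypotheses (hc1 : c1 ta = 0) (hc2 : c2 tb = 0) (hc3 : c3 tc = 0)
  (hc3n : forall j, (tc < j)%N -> c3 j != 0).
Variables (T1 T2 T3 : P -> P).
Hypothesis HT1 : forall p m, (T1 p)@_m = c1 (m 0).+1 * p@_(m + U_(0%R))%MM.
Hypothesis HT2 : forall p m, (T2 p)@_m = c2 (m 1).+1 * p@_(m + U_(1%R))%MM.
Hypothesis HT3 : forall p m, (T3 p)@_m = c3 (m 2).+1 * p@_(m + U_(2%R))%MM.

Definition Sp (v : P * P) : Prop :=
  [/\ v.1 \is n.-homog, v.2 \is n.-homog, Dir T1 T2 T3 v = 0 &
      forall m : 'X_{1..3}, (v.1@_m != 0) || (v.2@_m != 0) ->
         [&& (ta <= m 0%R)%N, (tb <= m 1%R)%N & (tc <= m 2%R)%N]].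

Let d := (n.+1 - (ta + tb + tc))%N.
Let mono s := mk (ta + s) (tb + (d - 1 - s)) tc.
Definition initb (j : nat) (a b : nat) : C * C :=
  let s := if (j < d)%N then j else (j - d)%N in
  if (a == ta + s)%N && (b == tb + (d - 1 - s))%N then
    (if (j < d)%N then (1, 0) else (0, 1)) else (0, 0).

Lemma initb_supp j a b : (a < ta)%N || (b < tb)%N -> initb j a b = (0, 0).
Proof. rewrite /initb; case: ifP => // /andP [/eqP -> /eqP ->]; lia. Qed.

Lemma mono_deg s : (s < d)%N -> mdeg (mono s) = n.
Proof. move=> hs; rewrite mdeg3; have [-> -> ->] := mkE (ta + s) (tb + (d - 1 - s)) tc; lia. Qed.

Lemma bj_coef j s : (j < d + d)%N -> (s < d)%N ->
  (bv c1 c2 c3 tc n (initb j)).1@_(mono s) = (j == s)%:R /\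
  (bv c1 c2 c3 tc n (initb j)).2@_(mono s) = (j == d + s)%:R.
Proof.
move=> hj hs; rewrite /bv /= !ofcE mono_deg // eqxx.
have [-> -> ->] := mkE (ta + s) (tb + (d - 1 - s)) tc.
rewrite F_tc /initb.
case: (ltnP j d) => hjd.
  have -> : ((ta + s == ta + j)%N && (tb + (d - 1 - s) == tb + (d - 1 - j))%N) = (j == s).
    by apply/andP/eqP => [[/eqP ? /eqP ?]|->]; [lia|].
  have -> : (j == d + s) = false by apply/eqP; lia.
  by case: eqP.
have -> : ((ta + s == ta + (j - d))%N && (tb + (d - 1 - s) == tb + (d - 1 - (j - d)))%N) = (j == d + s).
  by apply/andP/eqP => [[/eqP ? /eqP ?]|->]; [lia|split; apply/eqP; lia].
have -> : (j == s) = false by apply/eqP; lia.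
by case: eqP.
Qed.


Lemma comb_coef (c : 'I_(d + d) -> C) s (hs : (s < d)%N) :
  (\sum_(j < d + d) c j *: bv c1 c2 c3 tc n (initb j)).1@_(mono s)
     = c (Ordinal (ltn_addr d hs)) /\
  (\sum_(j < d + d) c j *: bv c1 c2 c3 tc n (initb j)).2@_(mono s)
     = c (Ordinal (lt_dds hs)).
Proof.
rewrite sum_fst sum_snd !raddf_sum /=; split.
  rewrite -sum_pick; apply: eq_bigr => j _.
  by rewrite mcoeffZ (bj_coef (ltn_ord j) hs).1.
rewrite -sum_pick; apply: eq_bigr => j _.
by rewrite mcoeffZ (bj_coef (ltn_ord j) hs).2.
Qed.

Lemma bv_Sp j : Sp (bv c1 c2 c3 tc n (initb j)).
Proof.
split.
- by apply/dhomogP => m; rewrite mcoeff_msupp /bv /= ofcE; case: (eqVneq (mdeg m) n) => //= _; rewrite eqxx.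
- by apply/dhomogP => m; rewrite mcoeff_msupp /bv /= ofcE; case: (eqVneq (mdeg m) n) => //= _; rewrite eqxx.
- by apply/(Dir_eq0 HT1 HT2 HT3) => m; exact: bvE.
move=> m; rewrite /bv /= !ofcE; case: (eqVneq (mdeg m) n) => [_|_] /=; last by rewrite eqxx.
case: (ltnP (m 2) tc) => h2.
  by rewrite F_lt //= eqxx.
case: (boolP ((m 0%R < ta)%N || (m 1%R < tb)%N)) => hab.
  by rewrite (@F_supp R c1 c2 c3 ta tb tc hc1 hc2 _ (@initb_supp j)) //= eqxx.
move=> _; apply/and3P; split => //; lia.
Qed.

Theorem main_abs : has_dim Sp (d + d).
Proof.
exists (fun j => bv c1 c2 c3 tc n (initb j)); split.
- move=> j; exact: bv_Sp.
- move=> c hc j0.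
  pose s := if (j0 < d)%N then (j0 : nat) else (j0 - d)%N.
  have hs : (s < d)%N by have := ltn_ord j0; rewrite /s; case: ifP; lia.
  have [e1 e2] := comb_coef c hs.
  rewrite hc /= mcoeff0 in e1 e2.
  case: (ltnP j0 d) => hj.
    have -> : j0 = Ordinal (ltn_addr d hs) by apply: val_inj; rewrite /= /s hj.
    by rewrite -e1.
  have -> : j0 = Ordinal (lt_dds hs).
    apply: val_inj; rewrite /= /s; case: ifP; lia.
  by rewrite -e2.
move=> v [h1 h2 hD hsupp].
pose cf (j : 'I_(d + d)) := if (j < d)%N then v.1@_(mono j) else v.2@_(mono (j - d)).
exists cf.
set w := \sum_(j < d + d) cf j *: bv c1 c2 c3 tc n (initb j).
have hDw : Dir T1 T2 T3 w = 0.
  rewrite /w; apply: (big_ind (fun u => Dir T1 T2 T3 u = 0)).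
  - by apply/(Dir_eq0 HT1 HT2 HT3) => m; rewrite /E1 /E2 /= !mcoeff0; split; ring.
  - by move=> x y hx hy; rewrite (DirD HT1 HT2 HT3) hx hy addr0.
  move=> j _; rewrite (DirZ HT1 HT2 HT3).
  by have [_ _ -> _] := bv_Sp j; rewrite scaler0.
have hvw : Dir T1 T2 T3 (v - w) = 0.
  by rewrite -scaleN1r (DirD HT1 HT2 HT3) (DirZ HT1 HT2 HT3) hD hDw scaler0 addr0.
suff H : forall m, (v - w).1@_m = 0 /\ (v - w).2@_m = 0.
  apply/eqP; rewrite -subr_eq0; apply/eqP.
  apply: (@pair_equal_spec _ _ _ _ _ _).2; split; apply/mpolyP => m; rewrite mcoeff0.
    exact: (H m).1.
  exact: (H m).2.
apply: (uniqE hc3n (g1 := fun m => (v - w).1@_m) (g2 := fun m => (v - w).2@_m)).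
  exact/(Dir_eq0 HT1 HT2 HT3).
have vz : forall m : 'X_{1..3}, ~~ [&& (ta <= m 0%R)%N, (tb <= m 1%R)%N & (tc <= m 2%R)%N] ->
    v.1@_m = 0 /\ v.2@_m = 0.
  move=> m hm; case: (eqVneq (v.1@_m) 0) => z1; case: (eqVneq (v.2@_m) 0) => z2 //;
  by move: hm; rewrite hsupp // ?z1 ?z2 ?orbT.
have wE1 : forall m, w.1@_m = \sum_(j < d + d) cf j *
     (if mdeg m == n then (F c1 c2 c3 tc (initb j) (m 2) (m 0) (m 1)).1 else 0).
  by move=> m; rewrite /w sum_fst raddf_sum; apply: eq_bigr => j _; rewrite /= mcoeffZ ofcE.
have wE2 : forall m, w.2@_m = \sum_(j < d + d) cf j *
     (if mdeg m == n then (F c1 c2 c3 tc (initb j) (m 2) (m 0) (m 1)).2 else 0).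
  by move=> m; rewrite /w sum_snd raddf_sum; apply: eq_bigr => j _; rewrite /= mcoeffZ ofcE.
move=> m hm2; rewrite /= !mcoeffB.
case: (eqVneq (mdeg m) n) => hdeg; last first.
  have z1 : w.1@_m = 0 by rewrite wE1 big1 // => j _; rewrite (negbTE hdeg) mulr0.
  have z2 : w.2@_m = 0 by rewrite wE2 big1 // => j _; rewrite (negbTE hdeg) mulr0.
  by rewrite z1 z2 (dhomog_nemf_coeff h1) ?(dhomog_nemf_coeff h2) ?hdeg // subrr.
case: (ltnP (m 2) tc) => hlt.
  have [-> ->] : v.1@_m = 0 /\ v.2@_m = 0 by apply: vz; rewrite (leqNgt tc) hlt !andbF.
  have z1 : w.1@_m = 0 by rewrite wE1 big1 // => j _; rewrite hdeg eqxx F_lt // mulr0.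
  have z2 : w.2@_m = 0 by rewrite wE2 big1 // => j _; rewrite hdeg eqxx F_lt // mulr0.
  by rewrite z1 z2 subrr.
case: (boolP ((m 0%R < ta)%N || (m 1%R < tb)%N)) => hab.
  have [-> ->] : v.1@_m = 0 /\ v.2@_m = 0.
    by apply: vz; apply/negP => /and3P [? ? ?]; move: hab; lia.
  have z1 : w.1@_m = 0.
    by rewrite wE1 big1 // => j _; rewrite hdeg eqxx (@F_supp R c1 c2 c3 ta tb tc hc1 hc2 _ (@initb_supp j)) // mulr0.
  have z2 : w.2@_m = 0.
    by rewrite wE2 big1 // => j _; rewrite hdeg eqxx (@F_supp R c1 c2 c3 ta tb tc hc1 hc2 _ (@initb_supp j)) // mulr0.
  by rewrite z1 z2 subrr.
have hm : m 2 = tc by apply/eqP; rewrite eqn_leq hm2 hlt.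
have hdeg' := hdeg; rewrite mdeg3 in hdeg'.
pose s := (m 0%R - ta)%N.
have hs : (s < d)%N by rewrite /s /d; lia.
have em : m = mono s.
  rewrite [LHS]mk_eta /mono; congr mk; rewrite /s /d; lia.
have [e1 e2] := comb_coef cf hs.
rewrite -em in e1 e2; rewrite e1 e2 /cf /= hs.
have -> : (d + s < d)%N = false by lia.
by rewrite (_ : (d + s - d)%N = s) ?addKn // -em !subrr.
Qed.

End Final.


Lemma cc_props (R : realType) (k : R) t : t_index k = Some t ->
  cc k t = 0 /\ forall j, (t < j)%N -> cc k j != 0.
Proof.
rewrite /t_index; case: ifP => // /andP [hn ho] [<-].
move: ho; set t0 := Num.truncn (- (2 * k)) => ho.
have h2 : 2 * (k%:C)%C = - (t0%:R) :> R[i].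
  have e : (t0%:R : R) = - (2 * k) by rewrite /t0; exact: (archimedean.Num.Theory.truncnK hn).
  have -> : (2 : R[i]) = (2 : R)%:C%C by rewrite rmorph_nat.
  by rewrite -rmorphM /= -[(t0%:R : R[i])](rmorph_nat (real_complex R)) /= e rmorphN opprK.
have ccE : forall j, cc k j = j%:R - (odd j)%:R * t0%:R.
  move=> j; rewrite /cc -signr_odd; case: (odd j) => /=.
    by rewrite expr1 opprK mul1r -h2 mulrC (_ : 1 + 1 = 2 :> R[i]) // mulrC -mulNr; ring.
  by rewrite expr0 subrr mulr0 mul0r subr0 addr0.
split; first by rewrite ccE ho mul1r subrr.
move=> j hj; rewrite ccE; case: (boolP (odd j)) => hoj /=.
  by rewrite mul1r -natrB; [rewrite pnatr_eq0; lia | lia].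
by rewrite mul0r subr0 pnatr_eq0; lia.
Qed.

Lemma has_dim_ext (K : fieldType) (V : lmodType K) (S S' : V -> Prop) d :
  (forall v, S v <-> S' v) -> has_dim S d -> has_dim S' d.
Proof.
move=> e [b [h1 h2 h3]]; exists b; split => //.
- by move=> j; apply/e.
- by move=> v /e; apply: h3.
Qed.

Lemma has_dim0 (K : fieldType) (V : lmodType K) (S : V -> Prop) :
  (forall v, S v -> v = 0) -> has_dim S 0.
Proof.
move=> h; exists (fun _ => 0); split.
- by case.
- by move=> c _; case.
- by move=> v /h ->; exists (fun _ => 0); rewrite big_ord0.
Qed.

Theorem proposition3p5 (R : realType) (k1 k2 k3 : R) (n : nat) :
  has_dim (Mn123 k1 k2 k3 n) (expected_dim n (t_index k1) (t_index k2) (t_index k3)).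
Proof.
case E1: (t_index k1) => [ta|]; last first.
  by apply: has_dim0 => v [[_ h] _ _]; move: h; rewrite E1.
case E2: (t_index k2) => [tb|]; last first.
  by apply: has_dim0 => v [_ [_ h] _]; move: h; rewrite E2.
case E3: (t_index k3) => [tc|]; last first.
  by apply: has_dim0 => v [_ _ [_ h]]; move: h; rewrite E3.
have [hc1 _] := cc_props E1.
have [hc2 _] := cc_props E2.
have [hc3 hc3n] := cc_props E3.
have HT1 := @dunkl_coef R k1 0.
have HT2 := @dunkl_coef R k2 1.
have HT3 := @dunkl_coef R k3 2.
have -> : expected_dim n (Some ta) (Some tb) (Some tc) =
    ((n.+1 - (ta + tb + tc)) + (n.+1 - (ta + tb + tc)))%N.
  rewrite /expected_dim; case: ifP; lia.
apply: has_dim_ext (@main_abs R _ _ _ ta tb tc n hc1 hc2 hc3 hc3n _ _ _ HT1 HT2 HT3).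
move=> v; rewrite /Mn123 /Mnx /Mn E1 E2 E3; split.
  case=> h1 h2 hD hs.
  have hD' : Dirac k1 k2 k3 v = 0 by exact: hD.
  split; (split; [by split | move=> m; rewrite mem_cat !mcoeff_msupp => /hs /and3P [? ? ?] //]).
move=> [[[h1 [h2 hD]] s1] [_ s2] [_ s3]].
split => // m hm; apply/and3P; split; [apply: s1 | apply: s2 | apply: s3];
  by rewrite mem_cat !mcoeff_msupp.
Qed.
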